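(* The following two statements are equivalent. (i) (Edmonds–Giles statement) For every digraph $D=(V,A)$ and every weight $w\in\{0,1\}^A$ such that $D$ has a dicut, if $\tau$ denotes the minimum weight $w(C)$ of a dicut $C$, then there exist $\tau$ dijoins $J_1,\dots,J_\tau$ of $D$ such that every arc $e$ lies in at most $w_e$ of them. (ii) For every undirected graph $G$ and every integer $\tau>0$, every $\tau$-SCO $x$ of $G$ can be decomposed into $\tau$ SCO's, i.e. there exist strongly connected orientations $O_1,\dots,O_\tau$ of $G$ with $x=\sum_{i=1}^\tau \chi_{O_i}$.
   Context: Graphs and digraphs are finite and loopless; parallel edges/arcs allowed. For a digraph, $\delta^+(U)$ / $\delta^-(U)$ denote arcs leaving/entering $U$; a dicut is $\delta^+_D(U)$ with $\emptyset\neq U\subsetneq V$ and $\delta^-_D(U)=\emptyset$; a dijoin is an arc set meeting every dicut. For an undirected graph $G=(V,E)$, $\vec G=(V,E^+\cup E^-)$ is the digraph obtained by replacing each edge $e=\{u,v\}$ by two arcs $e^+=(u,v)$ and $e^-=(v,u)$ (the choice of which is $e^+$ is arbitrary). An orientation of $G$ is a set $O\subseteq E^+\cup E^-$ containing exactly one of $e^+,e^-$ for each $e\in E$; it is a strongly connected orientation (SCO) if $\delta^+_{\vec G}(U)\cap O\neq\emptyset$ for all $\emptyset\neq U\subsetneq V$. $\chi_O$ is its characteristic vector. For an integer $\tau>0$, a $\tau$-SCO of $G$ is an integral vector $x\in\mathbb{Z}^{E^+\cup E^-}$ with $x_{e^+},x_{e^-}\ge0$ and $x_{e^+}+x_{e^-}=\tau$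 for all $e\in E$, and $x(\delta^+_{\vec G}(U))\ge\tau$ for all $\emptyset\neq U\subsetneq V$. *)

(* Defs.v *)
From mathcomp Require Import all_boot.
Set Implicit Arguments. Unset Strict Implicit. Unset Printing Implicit Defensive.

Definition loopless_digraph (V A : finType) (tl hd : A -> V) : Prop :=
  forall a, tl a != hd a.

Definition dout (V A : finType) (tl hd : A -> V) (U : {set V}) : {set A} :=
  [set a | (tl a \in U) && (hd a \notin U)].
Definition din (V A : finType) (tl hd : A -> V) (U : {set V}) : {set A} :=
  [set a | (hd a \in U) && (tl a \notin U)].

Definition proper_nonempty (V : finType) (U : {set V}) : bool :=
  (U != set0) && (U != setT).

Definition is_dicut (V A : finType) (tl hd : A -> V) (C : {set A}) : Prop :=
  exists U : {set V}, [/\ proper_nonempty U, din tl hd U = set0 & C = dout tl hd U].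

Definition is_dijoin (V A : finType) (tl hd : A -> V) (J : {set A}) : Prop :=
  forall C, is_dicut tl hd C -> J :&: C != set0.

Definition weight (A : finType) (w : A -> nat) (C : {set A}) : nat := \sum_(a in C) w a.

Definition EdmondsGiles : Prop :=
  forall (V A : finType) (tl hd : A -> V) (w : A -> nat),
    loopless_digraph tl hd ->
    (forall a, w a <= 1) ->
    forall tau : nat,
      (exists C, is_dicut tl hd C /\ weight w C = tau) ->
      (forall C, is_dicut tl hd C -> tau <= weight w C) ->
      exists J : 'I_tau -> {set A},
        (forall i, is_dijoin tl hd (J i)) /\
        (forall a, #|[set i | a \in J i]| <= w a).

(* ends e = (u, v); loopless: u != v. The bidirected graph vec G has arc set
   E * bool, where (e, true) = e^+ = (u, v) and (e, false) = e^- = (v, u). *)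
Definition loopless_graph (V E : finType) (ends : E -> V * V) : Prop :=
  forall e, (ends e).1 != (ends e).2.

Definition btail (V E : finType) (ends : E -> V * V) (a : E * bool) : V :=
  if a.2 then (ends a.1).1 else (ends a.1).2.
Definition bhead (V E : finType) (ends : E -> V * V) (a : E * bool) : V :=
  if a.2 then (ends a.1).2 else (ends a.1).1.

Definition bout (V E : finType) (ends : E -> V * V) (U : {set V}) : {set E * bool} :=
  dout (btail ends) (bhead ends) U.

Definition is_orientation (E : finType) (O : {set E * bool}) : Prop :=
  forall e : E, ((e, true) \in O) (+) ((e, false) \in O).

Definition is_SCO (V E : finType) (ends : E -> V * V) (O : {set E * bool}) : Prop :=
  is_orientation O /\
  forall U : {set V}, proper_nonempty U -> bout ends U :&: O != set0.

(* tau-SCO: x integral (here nat-valued, hence >= 0), x_{e+} + x_{e-} = tau,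
   and x(delta^+(U)) >= tau for all nonempty proper U *)
Definition is_tau_SCO (V E : finType) (ends : E -> V * V) (tau : nat)
    (x : E * bool -> nat) : Prop :=
  (forall e : E, x (e, true) + x (e, false) = tau) /\
  (forall U : {set V}, proper_nonempty U -> tau <= \sum_(a in bout ends U) x a).

Definition SCO_decomposition : Prop :=
  forall (V E : finType) (ends : E -> V * V),
    loopless_graph ends ->
    forall (tau : nat), 0 < tau ->
    forall x : E * bool -> nat, is_tau_SCO ends tau x ->
      exists O : 'I_tau -> {set E * bool},
        (forall i, is_SCO ends (O i)) /\
        (forall a : E * bool, x a = \sum_(i < tau) (a \in O i)).

(* Main.v *)
Require Import Defs.
From mathcomp Require Import all_boot.
From Stdlib Require Import Lia.
From mathcomp Require Import zify.
Set Implicit Arguments. Unset Strict Implicit. Unset Printing Implicit Defensive.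

Lemma card_set_sum (T : finType) (P : pred T) :
  #|[set x | P x]| = \sum_(x : T) P x.
Proof.
rewrite -sum1_card big_mkcond /=; apply: eq_bigr => x _; rewrite inE; by case: (P x).
Qed.

Lemma sum1_ordn n : \sum_(i < n) 1 = n.
Proof. by rewrite sum1_card card_ord. Qed.

Lemma sum_ltn_ord n k : \sum_(j < n) (j < k) = minn k n.
Proof.
elim: n => [|n IH]; first by rewrite big_ord0 minn0.
rewrite big_ord_recr /= IH.
case: (ltnP n k) => H; rewrite !minnE; lia.
Qed.

Lemma sum_ltn_eq n k d : k <= n ->
  \sum_(j < n) ((j < k) == d) = if d then k else n - k.
Proof.
move=> Hk; case: d.
  rewrite (eq_bigr (fun j : 'I_n => (j < k) : nat)); last by move=> j _; rewrite eqb_id.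
  by rewrite sum_ltn_ord; apply/minn_idPl.
have H : \sum_(j < n) (j < k) + \sum_(j < n) ((j < k) == false) = n.
  rewrite -big_split /= -[RHS]sum1_ordn; apply: eq_bigr => j _; by case: (_ < _).
have Hm : minn k n = k by apply/minn_idPl.
move: H; rewrite sum_ltn_ord Hm; lia.
Qed.

Lemma sum_fibers (I J : finType) (f : I -> J) (S : {set J}) :
  \sum_(b in S) #|[set q | f q == b]| = #|[set q | f q \in S]|.
Proof.
rewrite -sum1_card (partition_big f (fun b => b \in S)) /=; last by move=> q; rewrite inE.
apply: eq_bigr => b Hb; rewrite -sum1_card; apply: eq_bigl => q; rewrite !inE.
by case: eqP => [->|]; rewrite ?Hb ?andbF.
Qed.

Lemma sum_ge1_eq1 n (c : 'I_n -> nat) :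
  (forall i, 0 < c i) -> \sum_(i < n) c i <= n -> forall i, c i = 1.
Proof.
move=> H1 Hs i; apply/eqP; rewrite eqn_leq H1 andbT leqNgt; apply/negP => Hi.
have : \sum_(k < n) 1 < \sum_(k < n) c k.
  rewrite (bigD1 i) //= [X in _ < X](bigD1 i) //= -addSn; apply: leq_add => //.
  apply: leq_sum => k _; exact: H1.
rewrite sum1_ordn => H; by move: (leq_trans H Hs); rewrite ltnn.
Qed.

Lemma sum_le1_eq1 n (c : 'I_n -> nat) :
  (forall i, c i <= 1) -> n <= \sum_(i < n) c i -> forall i, c i = 1.
Proof.
move=> H1 Hs i; apply/eqP; rewrite eqn_leq H1 /= lt0n; apply/negP => /eqP Hi.
have : \sum_(k < n) c k < \sum_(k < n) 1.
  rewrite (bigD1 i) //= [X in _ < X](bigD1 i) //= Hi add0n add1n ltnS.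
  apply: leq_sum => k _; exact: H1.
rewrite sum1_ordn => H; by move: (leq_trans H Hs); rewrite ltnn.
Qed.

Lemma exists_sum (I : finType) (R : pred I) :
  \sum_(i : I) R i <= 1 -> ([exists i, R i] : nat) = \sum_(i : I) R i.
Proof.
move=> Hs; case: (boolP [exists i, R i]) => [/existsP [i Hi]|/existsPn H].
  by apply/eqP; rewrite eqn_leq Hs /= (bigD1 i) //= Hi.
by rewrite big1 // => i _; rewrite (negbTE (H i)).
Qed.

Lemma card_pair_fiber (E : finType) n (e : E) :
  #|[set q : E * 'I_n | q.1 == e]| = n.
Proof.
have -> : [set q : E * 'I_n | q.1 == e] = (pair e) @: [set: 'I_n].
  apply/setP => [[e' j]]; rewrite inE /=; apply/eqP/imsetP.
    by move=> ->; exists j; rewrite ?inE.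
  by case=> j' _ [-> _].
by rewrite card_imset ?cardsT ?card_ord // => j1 j2 [].
Qed.

Definition gtl (V E : finType) (ends : E -> V * V) (tau : nat) (x : E * bool -> nat)
  (a : ((E * bool) + (E * 'I_tau))%type) : (V + E)%type :=
  match a with
  | inl p => inl (btail ends p)
  | inr q => inl (btail ends (q.1, q.2 < x (q.1, true)))
  end.

Definition ghd (V E : finType) (tau : nat) (a : ((E * bool) + (E * 'I_tau))%type) : (V + E)%type :=
  match a with inl p => inr p.1 | inr q => inr q.1 end.

Definition gw (E : finType) (tau : nat) (a : ((E * bool) + (E * 'I_tau))%type) : nat :=
  if a is inr _ then 1 else 0.

Definition gO (E : finType) (tau : nat) (x : E * bool -> nat)
  (J : {set (E * bool) + (E * 'I_tau)}) : {set E * bool} :=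
  [set b | [exists j : 'I_tau, (inr (b.1, j) \in J) && ((j < x (b.1, true)) == b.2)]].

Lemma test1 (V E : finType) (v : V) (e : E) : ((inl v : (V + E)%type) == inr e) = false.
Proof. by []. Qed.
Lemma test2 (V E : finType) (e e' : E) : ((inr e' : (V + E)%type) == inr e) = (e' == e).
Proof. by []. Qed.

Lemma eg_to_sco : EdmondsGiles -> SCO_decomposition.
Proof.
move=> Heg; rewrite /SCO_decomposition => V E ends Hloop tau taupos x [Hsum Hcut].
case: (pickP (fun _ : E => true)) => [e0 _|Enone]; last first.
  exists (fun _ => set0); split.
    move=> i; split; first by move=> e; case: (Enone e).
    move=> U HU; have := Hcut U HU.
    rewrite big1; first by rewrite leqNgt taupos.
    by move=> [e d]; case: (Enone e).
  by move=> [e d]; case: (Enone e).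
have Hxle : forall e, x (e,true) <= tau by move=> e; rewrite -(Hsum e) leq_addr.
have Hxf : forall e, x (e,false) = tau - x (e,true) by move=> e; rewrite -(Hsum e) addKn.
have Hfib : forall b, x b = #|[set q : E * 'I_tau | (q.1, q.2 < x (q.1,true)) == b]|.
  move=> [e d].
  have -> : [set q : E * 'I_tau | (q.1, q.2 < x (q.1,true)) == (e,d)]
          = (pair e) @: [set j : 'I_tau | (j < x (e,true)) == d].
    apply/setP => [[e' j]]; rewrite inE /= xpair_eqE; apply/idP/imsetP.
      case/andP => /eqP -> Hj; exists j => //; by rewrite inE.
    by case=> j' Hj' [-> ->]; rewrite eqxx /=; move: Hj'; rewrite inE.
  rewrite card_imset; last by move=> j1 j2 [].
  rewrite card_set_sum sum_ltn_eq ?Hxle //; case: d => //; by rewrite Hxf.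
have Hl : loopless_digraph (gtl ends x) (@ghd V E tau) by case.
have Hw : forall a, @gw E tau a <= 1 by case.
have Hweight : forall C : {set (E * bool) + (E * 'I_tau)},
    weight (@gw E tau) C = #|[set q | inr q \in C]|.
  move=> C; rewrite /weight big_mkcond big_sumType /= big1 ?add0n; last by move=> p _; case: ifP.
  rewrite card_set_sum; apply: eq_bigr => q _; by case: ifP.
have Hdic : forall e, is_dicut (gtl ends x) (@ghd V E tau)
    (dout (gtl ends x) (@ghd V E tau) (~: [set (inr e : (V + E)%type)])).
  move=> e; exists (~: [set inr e]); split => //.
    apply/andP; split.
      apply/set0Pn; exists (inl (ends e).1); by rewrite !inE.
    apply/eqP => H; have : (inr e : (V + E)%type) \in ~: [set inr e] by rewrite H inE.
    by rewrite !inE eqxx.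
  apply/setP => a; rewrite !inE; by case: a => [p|q] /=; rewrite andbF.
have Hcard : forall e, #|[set q : E * 'I_tau | inr q \in
    dout (gtl ends x) (@ghd V E tau) (~: [set (inr e : (V + E)%type)])]| = tau.
  move=> e; rewrite -[RHS](@card_pair_fiber E tau e); apply: eq_card => q; rewrite !inE /=.
  by rewrite negbK.

have Hmin : forall C, is_dicut (gtl ends x) (@ghd V E tau) C -> tau <= weight (@gw E tau) C.
  move=> C [U [HU Hdin ->]]; rewrite Hweight.
  have Hcl : forall a, @ghd V E tau a \in U -> gtl ends x a \in U.
    move=> a Ha; apply/negPn/negP => Ht.
    have : a \in din (gtl ends x) (@ghd V E tau) U by rewrite !inE Ha Ht.
    by rewrite Hdin inE.
  pose W := [set v | (inl v : (V + E)%type) \in U].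
  have Hends : forall e, (inr e : (V + E)%type) \in U -> ((ends e).1 \in W) && ((ends e).2 \in W).
    move=> e He; rewrite !inE.
    by move: (Hcl (inl (e,true)) He) (Hcl (inl (e,false)) He) => /= -> ->.
  case: (boolP (W == set0)) => [/eqP W0|Wn0].
    exfalso; case/andP: HU => /set0Pn [z Hz] _.
    case: z Hz => [v|e] Hz.
      have : v \in W by rewrite inE.
      by rewrite W0 inE.
    by move: (Hends e Hz); rewrite W0 !inE.
  case: (boolP (W == setT)) => [/eqP WT|WnT].
    case/andP: HU => _ /negP HUT.
    have [z Hz] : exists z, z \notin U.
      case: (pickP (fun z => z \notin U)) => [z Hz|H]; first by exists z.
      exfalso; apply: HUT; apply/eqP/setP => z; rewrite inE; by move: (H z) => /negbFE.
    case: z Hz => [v|e] Hz.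
      exfalso; move: Hz; have : v \in W by rewrite WT inE.
      by rewrite inE => ->.
    rewrite -[X in X <= _](@card_pair_fiber E tau e); apply: subset_leq_card; apply/subsetP => q.
    rewrite !inE => /eqP Hq; rewrite /= Hq Hz andbT.
    have Hb : btail ends (e, q.2 < x (e, true)) \in W by rewrite WT inE.
    by rewrite inE in Hb.
  have HW : proper_nonempty W by rewrite /proper_nonempty Wn0 WnT.
  apply: leq_trans (Hcut W HW) _.
  rewrite (eq_bigr (fun b => #|[set q : E * 'I_tau | (q.1, q.2 < x (q.1,true)) == b]|));
    last by move=> b _; rewrite -Hfib.
  rewrite (sum_fibers (fun q : E * 'I_tau => (q.1, q.2 < x (q.1,true)))).
  apply: subset_leq_card; apply/subsetP => q; rewrite !inE /btail /bhead /= => /andP [H1 H2].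
  apply/andP; split; first by rewrite /btail /=.
  apply/negP => Hq; move: (Hends _ Hq) => /andP [Hu Hv]; rewrite !inE in Hu Hv.
  by move: H2; case: (q.2 < x (q.1, true)); rewrite ?Hu ?Hv.
have [J [HJ HJw]] := Heg _ _ (gtl ends x) (@ghd V E tau) (@gw E tau) Hl Hw tau
   (ex_intro _ _ (conj (Hdic e0) (etrans (Hweight _) (Hcard e0)))) Hmin.
have HJ0 : forall i p, inl p \notin J i.
  move=> i p; apply/negP => Hin.
  have := HJw (inl p); rewrite /gw /= leqn0 cards_eq0 => /eqP H.
  have : i \in [set i | inl p \in J i] by rewrite inE.
  by rewrite H inE.
have Hex : forall i e, exists j, inr (e,j) \in J i.
  move=> i e; have := HJ i _ (Hdic e); case/set0Pn => a; rewrite inE => /andP [Ha Hd].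
  case: a Ha Hd => [p|[e' j]] Ha Hd; first by rewrite (negbTE (HJ0 i p)) in Ha.
  exists j; move: Hd; rewrite !inE /= negbK => /eqP [<-] //.
have Hcount : forall e, (forall i, \sum_(j < tau) (inr (e,j) \in J i) = 1) /\
                        (forall j, \sum_(i < tau) (inr (e,j) \in J i) = 1).
  move=> e.
  have Hd1 : forall j : 'I_tau, \sum_(i < tau) (inr (e,j) \in J i) <= 1.
    move=> j; rewrite -card_set_sum; exact: (HJw (inr (e,j))).
  have Hc1 : forall i : 'I_tau, 0 < \sum_(j < tau) (inr (e,j) \in J i).
    move=> i; have [j Hj] := Hex i e; by rewrite (bigD1 j) //= Hj.
  have Hsumc : \sum_(i < tau) \sum_(j < tau) (inr (e,j) \in J i) <= tau.
    rewrite exchange_big /= -[X in _ <= X]sum1_ordn; apply: leq_sum => j _; exact: Hd1.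
  have Hc := sum_ge1_eq1 Hc1 Hsumc.
  split => //.
  apply: sum_le1_eq1 => //.
  rewrite -exchange_big /= (eq_bigr (fun _ => 1)) ?sum1_ordn // => i _; exact: Hc.
have HOnat : forall i e d, (((e,d) \in gO x (J i)) : nat) =
    \sum_(j < tau) ((inr (e,j) \in J i) && ((j < x (e,true)) == d)).
  move=> i e d; rewrite inE /=; apply: exists_sum.
  apply: leq_trans (_ : \sum_(j < tau) (inr (e,j) \in J i) <= 1); last by rewrite ((Hcount e).1 i).
  apply: leq_sum => j _; by case: (_ \in J i); case: (_ == d).
exists (fun i => gO x (J i)); split.
  move=> i; split.
    move=> e.
    have Hs : \sum_(j < tau) ((inr (e,j) \in J i) && ((j < x (e,true)) == true))
            + \sum_(j < tau) ((inr (e,j) \in J i) && ((j < x (e,true)) == false)) = 1.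
      rewrite -big_split /= -((Hcount e).1 i); apply: eq_bigr => j _.
      by case: (_ \in _); case: (_ < _).
    move: Hs; rewrite -HOnat -HOnat.
    by case: ((e,true) \in gO x (J i)); case: ((e,false) \in gO x (J i)).
  move=> W HW.
  pose U := [set z : (V + E)%type | match z with
              | inl v => v \in W
              | inr e => ((ends e).1 \in W) && ((ends e).2 \in W) end].
  have HU : proper_nonempty U.
    case/andP: HW => /set0Pn [v Hv] /negP HWT; apply/andP; split.
      apply/set0Pn; exists (inl v); by rewrite inE.
    apply/negP => /eqP HUT; apply: HWT; apply/eqP/setP => v0; rewrite inE.
    have : (inl v0 : (V + E)%type) \in U by rewrite HUT inE.
    by rewrite inE.
  have Hdin : din (gtl ends x) (@ghd V E tau) U = set0.
    apply/setP => a; rewrite !inE.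
    case: a => [[e d]|[e j]]; rewrite /btail /=; [case: d | case: (_ < _)];
      by case: ((ends e).1 \in W); case: ((ends e).2 \in W).
  have := HJ i _ (ex_intro _ U (And3 HU Hdin (erefl _))).
  case/set0Pn => a; rewrite inE => /andP [Ha Hd].
  case: a Ha Hd => [p|[e j]] Ha Hd; first by rewrite (negbTE (HJ0 i p)) in Ha.
  apply/set0Pn; exists (e, j < x (e,true)); rewrite inE; apply/andP; split.
    move: Hd; rewrite !inE /btail /bhead /=.
    case: (j < x (e,true)) => /andP [H1 H2]; rewrite H1 /=; by move: H2; rewrite H1 ?andbT.
  rewrite inE /=; apply/existsP; exists j; by rewrite Ha eqxx.
move=> [e d].
rewrite (eq_bigr (fun i => \sum_(j < tau) ((inr (e,j) \in J i) && ((j < x (e,true)) == d))));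
  last by move=> i _; rewrite HOnat.
rewrite exchange_big /=.
rewrite (eq_bigr (fun j : 'I_tau => ((j < x (e,true)) == d) : nat)); last first.
  move=> j _; case: ((j < x (e,true)) == d).
    rewrite -[RHS]((Hcount e).2 j); apply: eq_bigr => i _; by rewrite andbT.
  by rewrite big1 // => i _; rewrite andbF.
rewrite sum_ltn_eq ?Hxle //; case: d => //=; by rewrite Hxf.
Qed.
Lemma sum_ge_elem (T : finType) (S : {set T}) (F : T -> nat) a :
  a \in S -> F a <= \sum_(b in S) F b.
Proof. move=> Ha; rewrite (bigD1 a) //=; exact: leq_addr. Qed.

Lemma sum_subset_le (T : finType) (S S' : {set T}) (F : T -> nat) :
  S \subset S' -> \sum_(a in S) F a <= \sum_(a in S') F a.
Proof.
move=> sub; rewrite [X in _ <= X]big_mkcond [X in X <= _]big_mkcond /=.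
apply: leq_sum => a _; case: ifP => // Ha; by rewrite (subsetP sub a Ha).
Qed.

Lemma propC (V : finType) (U : {set V}) : proper_nonempty U -> proper_nonempty (~: U).
Proof.
case/andP => H1 H2; apply/andP; split; apply/negP => /eqP H.
  by move: H2; rewrite -(setCK U) H setC0 eqxx.
by move: H1; rewrite -(setCK U) H setCT eqxx.
Qed.

Lemma sco_to_eg : SCO_decomposition -> EdmondsGiles.
Proof.
move=> Hsco; rewrite /EdmondsGiles => V A tl hd w Hloop Hw tau [C0 [HC0 HwC0]] Hmin.
case: (posnP tau) => [tau0|taupos].
  rewrite tau0; exists (fun _ => set0); split; first by move=> i; case: i => m; rewrite ltn0.
  move=> a; apply: leq_trans (max_card _) _; by rewrite card_ord.
pose E := (A * bool)%type.
pose ends := fun e : E => (tl e.1, hd e.1).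
pose x := fun b : E * bool => if b.2 then (if b.1.2 then tau - w b.1.1 else tau)
                              else (if b.1.2 then w b.1.1 else 0).
have Hl : loopless_graph ends by move=> e; exact: Hloop.
have Hx : is_tau_SCO ends tau x.
  split.
    move=> [a c] /=; rewrite /x /=; case: c => /=; last by rewrite addn0.
    rewrite subnK //; exact: leq_trans (Hw a) taupos.
  move=> U HU.
  case: (boolP [exists a, (tl a \in U) && (hd a \notin U)]).
    case/existsP => a /andP [Ha1 Ha2].
    have Hin : ((a,false),true) \in bout ends U by rewrite !inE /btail /bhead /= Ha1 Ha2.
    apply: leq_trans (sum_ge_elem x Hin); by rewrite /x.
  move=> Hno.
  have HC : is_dicut tl hd (dout tl hd (~: U)).
    exists (~: U); split => //; first exact: propC.
    apply/setP => a; rewrite !inE; apply/negbTE/negP => /andP [Hh Ht].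
    move/existsPn: Hno => /(_ a); by rewrite negbK in Ht; rewrite Ht Hh.
  apply: leq_trans (Hmin _ HC) _.
  rewrite /weight.
  have -> : \sum_(a in dout tl hd (~: U)) w a = \sum_(a in dout tl hd (~: U)) x ((a,true),false)
    by apply: eq_bigr => a _; rewrite /x.
  rewrite -(big_imset x (h := fun a => ((a,true),false))) /=; last by move=> a1 a2 _ _ [].
  apply: sum_subset_le; apply/subsetP => b /imsetP [a Ha ->].
  move: Ha; rewrite !inE /btail /bhead /= negbK => /andP [H1 H2]; by rewrite H1 H2.
have [O [HO Hxo]] := Hsco V E ends Hl tau taupos x Hx.
exists (fun i => [set a | ((a,true),false) \in O i]); split.
  move=> i C [U [HU Hdin ->]].
  case: (HO i) => _ Hs; have := Hs _ (propC HU); case/set0Pn => b.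
  rewrite inE => /andP [Hb HbO].
  move: b Hb HbO => [[a c] d]; rewrite !inE /btail /bhead /=.
  case: d => /= /andP [H1 H2] HbO.
    have : a \in din tl hd U by rewrite !inE; rewrite negbK in H2; rewrite H2 H1.
    by rewrite Hdin inE.
  case: c HbO => HbO.
    apply/set0Pn; exists a; rewrite !inE HbO /=; rewrite negbK in H2; by rewrite H2 H1.
  have := Hxo ((a,false),false); rewrite /x /= => H.
  have : 0 < \sum_(i0 < tau) (((a,false),false) \in O i0) by rewrite (bigD1 i) //= HbO.
  by rewrite -H.
move=> a; rewrite card_set_sum.
have := Hxo ((a,true),false); rewrite /x /= => H.
rewrite (eq_bigr (fun i => (((a,true),false) \in O i) : nat)) ?H //.
by move=> i _; rewrite inE.
Qed.

Theorem theorem6 : EdmondsGiles <-> SCO_decomposition.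
Proof. split; [exact: eg_to_sco | exact: sco_to_eg]. Qed.
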